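(* Let $L(x|t_j)$ and $L'(x|t_j)$ be the operators defined in the context. Then on $V(x_i)\otimes V(x_{i'})\otimes V(t_j)$ $$R_{12}(x_i\ominus x_{i'})L_{13}(x_i|t_j)L_{23}(x_{i'}|t_j)=L_{23}(x_{i'}|t_j)L_{13}(x_i|t_j)R_{12}(x_i\ominus x_{i'}),$$ and the same identity holds with $L$ replaced by $L'$ and $R$ replaced by $R'$; and on $V(x_i)\otimes V(t_j)\otimes V(t_{j'})$ $$r_{23}(t_j\ominus t_{j'})L_{12}(x_i|t_j)L_{13}(x_i|t_{j'})=L_{13}(x_i|t_{j'})L_{12}(x_i|t_j)r_{23}(t_j\ominus t_{j'}),$$ and the same identity holds with $L$ replaced by $L'$ and the same $r$. Here $R,R',r$ are $4\times 4$ matrices, in the basis $v_0\otimes v_0,v_0\otimes v_1,v_1\otimes v_0,v_1\otimes v_1$, of the form $$\begin{pmatrix}a&0&0&0\\0&b&c&0\\0&c'&b'&0\\0&0&0&a'\end{pmatrix}$$ with entries: for $R$: $a=1,b=0,c=1,c'=1+\beta\, x_{i'}\ominus x_i,\ b'=x_{i'}\ominus x_i,\ a'=1$; for $R'$: $a=1,b=x_i\ominus x_{i'},c=1,c'=1+\beta\,x_i\ominus x_{i'},b'=0,a'=1$; for $r$: $a=1,b=0,c=1+\beta\,t_j\ominus t_{j'},c'=1,b'=t_j\ominus t_{j'},a'=1$.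
   Context: $\beta$ is an indeterminate, $x\oplus y=x+y+\beta xy$, $x\ominus y=(x-y)/(1+\beta y)$. $V=\mathbb{Z}v_0\oplus\mathbb{Z}v_1$, and $V(z)$ denotes $V$ with scalars extended to rational functions in $\beta$ and $z$. Let $\sigma^-v_1=v_0,\ \sigma^-v_0=0,\ \sigma^+v_0=v_1,\ \sigma^+v_1=0$. With $e_{ab}$ ($a,b\in\{0,1\}$) the matrix units on the first factor ($e_{ab}v_b=v_a$), the operators on $V(x)\otimes V(t_j)$ are $L=\sum_{a,b}e_{ab}\otimes L_{ab}$ with $L_{00}=\sigma^+\sigma^-+(x\ominus t_j)\sigma^-\sigma^+$, $L_{01}=(1+\beta\,x\ominus t_j)\sigma^+$, $L_{10}=\sigma^-$, $L_{11}=\sigma^-\sigma^+$; and $L'=\sum e_{ab}\otimes L'_{ab}$ with $L'_{00}=\sigma^-\sigma^++(x\oplus t_j)\sigma^+\sigma^-$, $L'_{01}=\sigma^+$, $L'_{10}=(1+\beta\,x\oplus t_j)\sigma^-$, $L'_{11}=\sigma^+\sigma^-$. Subscripts such as $L_{13}$ indicate on which tensor factors of a triple tensor product the operator acts. *)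

(* Defs.v *)
(* Operators on tensor products of copies of V = F v0 (+) F v1
   are represented by matrices acting on column vectors, with the Kronecker
   product [tensmx] of mathcomp-real-closed (index (i,j) |-> i*2+j, so that the
   basis of V (x) V is ordered v0v0, v0v1, v1v0, v1v1). *)
From HB Require Import structures.
From mathcomp Require Import all_boot all_order all_algebra.
From mathcomp Require Import mxtens.
Set Implicit Arguments. Unset Strict Implicit. Unset Printing Implicit Defensive.
Import GRing.Theory.
Local Open Scope ring_scope.

Section Defs.
Variable F : fieldType.

Definition oplus (b x y : F) : F := x + y + b * x * y.
Definition ominus (b x y : F) : F := (x - y) / (1 + b * y).

Definition v0 : 'I_2 := @ord0 1.
Definition v1 : 'I_2 := @ord_max 1.

Definition e (a b : 'I_2) : 'M[F]_2 := delta_mx a b.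
Definition sigp : 'M[F]_2 := delta_mx v1 v0.
Definition sigm : 'M[F]_2 := delta_mx v0 v1.
Definition id2 : 'M[F]_2 := 1%:M.

Definition Lop (b x t : F) : 'M[F]_(2 * 2) :=
  e v0 v0 *t (sigp *m sigm + ominus b x t *: (sigm *m sigp))
  + e v0 v1 *t ((1 + b * ominus b x t) *: sigp)
  + e v1 v0 *t sigm
  + e v1 v1 *t (sigm *m sigp).

Definition Lop' (b x t : F) : 'M[F]_(2 * 2) :=
  e v0 v0 *t (sigm *m sigp + oplus b x t *: (sigp *m sigm))
  + e v0 v1 *t sigp
  + e v1 v0 *t ((1 + b * oplus b x t) *: sigm)
  + e v1 v1 *t (sigp *m sigm).

Definition ix (i j : 'I_2) : 'I_(2 * 2) := mxtens_index (i, j).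

Definition blk (a b c c' b' a' : F) : 'M[F]_(2 * 2) :=
  a *: delta_mx (ix v0 v0) (ix v0 v0)
  + b *: delta_mx (ix v0 v1) (ix v0 v1)
  + c *: delta_mx (ix v0 v1) (ix v1 v0)
  + c' *: delta_mx (ix v1 v0) (ix v0 v1)
  + b' *: delta_mx (ix v1 v0) (ix v1 v0)
  + a' *: delta_mx (ix v1 v1) (ix v1 v1).

Definition Rmx (b xi xi' : F) : 'M[F]_(2 * 2) :=
  blk 1 0 1 (1 + b * ominus b xi' xi) (ominus b xi' xi) 1.
Definition Rmx' (b xi xi' : F) : 'M[F]_(2 * 2) :=
  blk 1 (ominus b xi xi') 1 (1 + b * ominus b xi xi') 0 1.
Definition rmx (b tj tj' : F) : 'M[F]_(2 * 2) :=
  blk 1 0 (1 + b * ominus b tj tj') 1 (ominus b tj tj') 1.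

Definition swap : 'M[F]_(2 * 2) := blk 1 0 1 1 0 1.

Definition op12 (X : 'M[F]_(2 * 2)) : 'M[F]_8 := X *t id2.
Definition op23 (X : 'M[F]_(2 * 2)) : 'M[F]_8 := id2 *t X.
Definition P23 : 'M[F]_8 := id2 *t swap.
Definition op13 (X : 'M[F]_(2 * 2)) : 'M[F]_8 := P23 *m op12 X *m P23.

End Defs.

(* Main.v *)
Require Import Defs.
From HB Require Import structures.
From mathcomp Require Import all_boot all_order all_algebra.
From mathcomp Require Import mxtens ring.
Import GRing.Theory.
Local Open Scope ring_scope.

Ltac enum8 i := case: i => [[|[|[|[|[|[|[|[|i]]]]]]]] ?] //.
Ltac enum4 i := case: i => [[|[|[|[|i]]]] ?] //.
Ltac cb := cbn -[GRing.mul GRing.add GRing.zero GRing.one GRing.opp GRing.inv ominus oplus].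
Section S.
Variable F : fieldType.

Definition blkf (a b c c' b' a' : F) (p q p' q' : bool) : F :=
  match p, q, p', q' with
  | false, false, false, false => a
  | false, true, false, true => b
  | false, true, true, false => c
  | true, false, false, true => c'
  | true, false, true, false => b'
  | true, true, true, true => a'
  | _, _, _, _ => 0
  end.

Definition b0 (i : nat) := odd i.
Definition b1 (i : nat) := odd i./2.
Definition b2 (i : nat) := odd i./2./2.

Definition M12 a b c c' b' a' : 'M[F]_8 :=
  \matrix_(i, j) (blkf a b c c' b' a' (b2 i) (b1 i) (b2 j) (b1 j) * (b0 i == b0 j)%:R).
Definition M23 a b c c' b' a' : 'M[F]_8 :=
  \matrix_(i, j) (blkf a b c c' b' a' (b1 i) (b0 i) (b1 j) (b0 j) * (b2 i == b2 j)%:R).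
Definition M13 a b c c' b' a' : 'M[F]_8 :=
  \matrix_(i, j) (blkf a b c c' b' a' (b2 i) (b0 i) (b2 j) (b0 j) * (b1 i == b1 j)%:R).

Lemma big8 (f : 'I_8 -> F) : \sum_(i < 8) f i =
  f (@Ordinal 8 0 isT) + f (@Ordinal 8 1 isT) + f (@Ordinal 8 2 isT) + f (@Ordinal 8 3 isT)
  + f (@Ordinal 8 4 isT) + f (@Ordinal 8 5 isT) + f (@Ordinal 8 6 isT) + f (@Ordinal 8 7 isT).
Proof. rewrite !big_ord_recr big_ord0 /= add0r. by do ! congr (_ + _); congr f; apply: val_inj. Qed.

Lemma big2 (f : 'I_2 -> F) : \sum_(i < 2) f i = f (@Ordinal 2 0 isT) + f (@Ordinal 2 1 isT).
Proof. rewrite !big_ord_recr big_ord0 /= add0r. by do ! congr (_ + _); congr f; apply: val_inj. Qed.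


Lemma LopE (b x t : F) :
  Lop b x t = blk (ominus b x t) 1 (1 + b * ominus b x t) 1 1 0.
Proof.
apply/matrixP => i j.
rewrite /Lop /blk /e /sigp /sigm !mxE.
enum4 i; enum4 j; rewrite ?big_ord_recr ?big_ord0 /= ?mxE /=; ring.
Qed.

Lemma Lop'E (b x t : F) :
  Lop' b x t = blk 1 (oplus b x t) 1 (1 + b * oplus b x t) 0 1.
Proof.
apply/matrixP => i j.
rewrite /Lop' /blk /e /sigp /sigm !mxE.
enum4 i; enum4 j; rewrite ?big_ord_recr ?big_ord0 /= ?mxE /=; ring.
Qed.


Lemma op12E a b c c' b' a' : op12 (blk a b c c' b' a') = M12 a b c c' b' a'.
Proof.
apply/matrixP => i j; rewrite /op12 /blk /id2 /M12 !mxE.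
by enum8 i; enum8 j; rewrite ?mxE /=; ring.
Qed.

Lemma op23E a b c c' b' a' : op23 (blk a b c c' b' a') = M23 a b c c' b' a'.
Proof.
apply/matrixP => i j; rewrite /op23 /blk /id2 /M23 !mxE.
by enum8 i; enum8 j; rewrite ?mxE /=; ring.
Qed.

Lemma op13E a b c c' b' a' : op13 (blk a b c c' b' a') = M13 a b c c' b' a'.
Proof.
rewrite /op13 op12E /P23 -/(op23 _) /swap op23E.
apply/matrixP => i j; rewrite /M12 /M23 /M13 !mxE.
under eq_bigr => k _ do rewrite !mxE.
under eq_bigr => k _ do under eq_bigr => l _ do rewrite !mxE.
under eq_bigr => k _ do rewrite big8.
rewrite big8.
enum8 i; enum8 j; cb; ring.
Qed.
End S.


Ltac triple := apply/matrixP => i j; rewrite !mxE;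
  under eq_bigr => k _ do rewrite !mxE;
  under eq_bigr => k _ do under eq_bigr => l _ do rewrite !mxE;
  under eq_bigr => k _ do rewrite big8; rewrite big8;
  under [RHS]eq_bigr => k _ do rewrite !mxE;
  under [RHS]eq_bigr => k _ do under eq_bigr => l _ do rewrite !mxE;
  under [RHS]eq_bigr => k _ do rewrite big8; rewrite [RHS]big8.

Lemma id1 (F : fieldType) (b xi xi' tj tj' : F)
  (hxi : 1 + b * xi != 0) (hxi' : 1 + b * xi' != 0)
  (htj : 1 + b * tj != 0) (htj' : 1 + b * tj' != 0) :
  op12 (Rmx b xi xi') *m op13 (Lop b xi tj) *m op23 (Lop b xi' tj) = op23 (Lop b xi' tj) *m op13 (Lop b xi tj) *m op12 (Rmx b xi xi').
Proof.
rewrite !LopE /Rmx op12E op13E op23E /M12 /M13 /M23.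
triple.
enum8 i; enum8 j.
all: cb; rewrite /ominus /oplus; field.
all: by rewrite ?hxi ?hxi' ?htj ?htj'.
Qed.

Lemma id2 (F : fieldType) (b xi xi' tj tj' : F)
  (hxi : 1 + b * xi != 0) (hxi' : 1 + b * xi' != 0)
  (htj : 1 + b * tj != 0) (htj' : 1 + b * tj' != 0) :
  op12 (Rmx' b xi xi') *m op13 (Lop' b xi tj) *m op23 (Lop' b xi' tj) = op23 (Lop' b xi' tj) *m op13 (Lop' b xi tj) *m op12 (Rmx' b xi xi').
Proof.
rewrite !Lop'E /Rmx' op12E op13E op23E /M12 /M13 /M23.
triple.
enum8 i; enum8 j.
all: cb; rewrite /ominus /oplus; field.
all: by rewrite ?hxi ?hxi' ?htj ?htj'.
Qed.

Lemma id3 (F : fieldType) (b xi xi' tj tj' : F)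
  (hxi : 1 + b * xi != 0) (hxi' : 1 + b * xi' != 0)
  (htj : 1 + b * tj != 0) (htj' : 1 + b * tj' != 0) :
  op23 (rmx b tj tj') *m op12 (Lop b xi tj) *m op13 (Lop b xi tj') = op13 (Lop b xi tj') *m op12 (Lop b xi tj) *m op23 (rmx b tj tj').
Proof.
rewrite !LopE /rmx op12E op13E op23E /M12 /M13 /M23.
triple.
enum8 i; enum8 j.
all: cb; rewrite /ominus /oplus; field.
all: by rewrite ?hxi ?hxi' ?htj ?htj'.
Qed.

Lemma id4 (F : fieldType) (b xi xi' tj tj' : F)
  (hxi : 1 + b * xi != 0) (hxi' : 1 + b * xi' != 0)
  (htj : 1 + b * tj != 0) (htj' : 1 + b * tj' != 0) :
  op23 (rmx b tj tj') *m op12 (Lop' b xi tj) *m op13 (Lop' b xi tj') = op13 (Lop' b xi tj') *m op12 (Lop' b xi tj) *m op23 (rmx b tj tj').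
Proof.
rewrite !Lop'E /rmx op12E op13E op23E /M12 /M13 /M23.
triple.
enum8 i; enum8 j.
all: cb; rewrite /ominus /oplus; field.
all: by rewrite ?hxi ?hxi' ?htj ?htj'.
Qed.

Theorem mainTheorem3 (F : fieldType) (b xi xi' tj tj' : F)
  (hxi : 1 + b * xi != 0) (hxi' : 1 + b * xi' != 0)
  (htj : 1 + b * tj != 0) (htj' : 1 + b * tj' != 0) :
  [/\ op12 (Rmx b xi xi') *m op13 (Lop b xi tj) *m op23 (Lop b xi' tj)
        = op23 (Lop b xi' tj) *m op13 (Lop b xi tj) *m op12 (Rmx b xi xi'),
      op12 (Rmx' b xi xi') *m op13 (Lop' b xi tj) *m op23 (Lop' b xi' tj)
        = op23 (Lop' b xi' tj) *m op13 (Lop' b xi tj) *m op12 (Rmx' b xi xi'),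
      op23 (rmx b tj tj') *m op12 (Lop b xi tj) *m op13 (Lop b xi tj')
        = op13 (Lop b xi tj') *m op12 (Lop b xi tj) *m op23 (rmx b tj tj')
    & op23 (rmx b tj tj') *m op12 (Lop' b xi tj) *m op13 (Lop' b xi tj')
        = op13 (Lop' b xi tj') *m op12 (Lop' b xi tj) *m op23 (rmx b tj tj')].
Proof. exact: (And4 (@id1 F b xi xi' tj tj' hxi hxi' htj htj') (@id2 F b xi xi' tj tj' hxi hxi' htj htj') (@id3 F b xi xi' tj tj' hxi hxi' htj htj') (@id4 F b xi xi' tj tj' hxi hxi' htj htj')). Qed.
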